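(* Let $n$ be even. For all $v_0,\dots,v_n\in\mathbb{R}^n$, $$P(v_0,\dots,v_n)=(-1)^{n/2}\,2^n\,\mathrm{Sm}(v_0,\dots,v_n).$$
   Context: $\mathrm{Or}(v_1,\dots,v_n)=\operatorname{sign}\det(v_1,\dots,v_n)$ (zero if not a basis). $P(v_0,\dots,v_n)=\prod_{i=0}^n\mathrm{Or}(v_0,\dots,\widehat{v_i},\dots,v_n)$. $S(v_0,\dots,v_n)=0$ if $0$ is not in the interior of the convex hull of $v_0,\dots,v_n$, and otherwise $S(v_0,\dots,v_n)=(-1)^i\mathrm{Or}(v_0,\dots,\widehat{v_i},\dots,v_n)$ for any $i$ (independent of $i$). $\mathrm{Sm}(v_0,\dots,v_n)=2^{-(n+1)}\sum_{\sigma_i\in\{\pm1\}}S(\sigma_0v_0,\dots,\sigma_nv_n)$. *)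

(* Defs.v *)
(* R^n is modelled by row vectors 'rV[R]_n over an arbitrary
   real field R (the reals being one instance). *)
From HB Require Import structures.
From mathcomp Require Import all_boot all_order all_algebra.
From Stdlib Require Import ClassicalEpsilon.
Set Implicit Arguments. Unset Strict Implicit. Unset Printing Implicit Defensive.
Import Order.TTheory GRing.Theory Num.Theory.
Local Open Scope ring_scope.

Section Defs.
Variable R : realFieldType.
Variable n : nat.

Definition Or (w : 'I_n -> 'rV[R]_n) : R :=
  Num.sg (\det (\matrix_(j < n) w j)).

Definition hat (v : 'I_n.+1 -> 'rV[R]_n) (i : 'I_n.+1) : 'I_n -> 'rV[R]_n :=
  fun j => v (lift i j).

Definition Pf (v : 'I_n.+1 -> 'rV[R]_n) : R := \prod_(i < n.+1) Or (hat v i).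

Definition in_conv_hull (v : 'I_n.+1 -> 'rV[R]_n) (x : 'rV[R]_n) : Prop :=
  exists l : 'I_n.+1 -> R,
    (forall i, 0 <= l i) /\ \sum_(i < n.+1) l i = 1 /\
    x = \sum_(i < n.+1) l i *: v i.

Definition in_interior (A : 'rV[R]_n -> Prop) (x : 'rV[R]_n) : Prop :=
  exists2 eps : R, 0 < eps &
    forall y : 'rV[R]_n, (forall j, `|y 0 j - x 0 j| < eps) -> A y.

(* S(v_0,...,v_n), using i = 0 in (-1)^i Or(v_0,..,^v_i,..,v_n) *)
Definition Sf (v : 'I_n.+1 -> 'rV[R]_n) : R :=
  if excluded_middle_informative (in_interior (in_conv_hull v) 0) then Or (hat v ord0) else 0.

(* Sm = 2^{-(n+1)} sum over sign choices sigma of S(sigma_0 v_0,...,sigma_n v_n);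
   sigma i = true encodes the sign -1. *)
Definition Sm (v : 'I_n.+1 -> 'rV[R]_n) : R :=
  (2 ^+ n.+1)^-1 *
  \sum_(s : {ffun 'I_n.+1 -> bool}) Sf (fun i => (-1) ^+ s i *: v i).

End Defs.

(* Main.v *)
Require Import Defs.
From HB Require Import structures.
From mathcomp Require Import all_boot all_order all_algebra.
Import Order.TTheory GRing.Theory Num.Theory.
Set Implicit Arguments. Unset Strict Implicit. Unset Printing Implicit Defensive.
Local Open Scope ring_scope.

Section H.
Variable R : realFieldType.
Variable n : nat.
Implicit Types v w : 'I_n.+1 -> 'rV[R]_n.

Definition hmx v (i : 'I_n.+1) : 'M[R]_n := \matrix_(j < n) hat v i j.

Lemma cramer v : ~~ odd n ->
  \sum_(i < n.+1) ((-1) ^+ (i : nat) * \det (hmx v i)) *: v i = 0.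
Proof.
move=> hn; apply/rowP => k; rewrite summxE mxE.
pose M := \matrix_(i < n.+1, j < n.+1)
   (match unlift ord_max j with Some j' => v i 0 j' | None => v i 0 k end).
have M0 : \det M = 0.
  rewrite -det_tr; apply: (@determinant_alternate _ _ _ (lift ord_max k) ord_max).
    by rewrite eq_sym; apply: neq_lift.
  by move=> j; rewrite !mxE liftK unlift_none.
rewrite (expand_det_col _ ord_max) in M0.
rewrite -[RHS]M0; apply: eq_bigr => i _.
rewrite !mxE unlift_none /cofactor /= exprD -(signr_odd _ n) (negbTE hn) expr0 mulr1.
have -> : row' i (col' ord_max M) = hmx v i.
  by apply/matrixP => a b; rewrite !mxE liftK.
by rewrite mulrC.
Qed.

Definition lf (x y : 'rV[R]_n) : R := \sum_l y 0 l * x 0 l.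

Lemma lf_conv w x y : in_conv_hull w y ->
  exists l : 'I_n.+1 -> R, (forall i, 0 <= l i) /\ lf x y = \sum_i l i * lf x (w i).
Proof.
case=> l [l0 [_ ->]]; exists l; split => //.
rewrite /lf.
under eq_bigr => j _ do rewrite summxE mulr_suml.
rewrite exchange_big /=; apply: eq_bigr => i _; rewrite mulr_sumr.
by apply: eq_bigr => j _; rewrite mxE mulrA.
Qed.

Lemma lfN x y : lf x (- y) = - lf x y.
Proof. by rewrite /lf -sumrN; apply: eq_bigr => j _; rewrite mxE mulNr. Qed.

Lemma not_int w k : \det (hmx w k) = 0 -> ~ in_interior (in_conv_hull w) 0.
Proof.
move=> hd.
have : \det (hmx w k)^T == 0 by rewrite det_tr hd.
case/det0P => x xn0 hx.
have fw : forall j, lf x (w (lift k j)) = 0.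
  move=> j; have := congr1 (fun M : 'M[R]_(1,n) => M 0 j) hx; rewrite !mxE => <-.
  by apply: eq_bigr => l _; rewrite !mxE mulrC.
have fc : forall y, in_conv_hull w y -> exists2 a, 0 <= a & lf x y = a * lf x (w k).
  move=> y /(lf_conv x) [l [lp ->]]; exists (l k) => //.
  rewrite (bigD1 k) //= big1 ?addr0 // => i ik.
  by case: (unliftP k i) ik => [j ->|->]; rewrite ?eqxx // fw mulr0.
have [l0 xl0] : exists l0, x 0 l0 != 0.
  apply/existsP; apply: contraR xn0 => /existsPn H; apply/eqP/rowP => j.
  by rewrite mxE; apply/eqP; move: (H j); rewrite negbK.
case=> e e0 H.
pose y := \row_l (if l == l0 then e / 2 else 0) : 'rV[R]_n.
have hy : forall j, `|y 0 j - (0 : 'rV[R]_n) 0 j| < e.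
  move=> j; rewrite !mxE subr0; case: eqP => _; last by rewrite normr0.
  by rewrite ger0_norm ?divr_ge0 ?ltW // ltr_pdivrMr // ltr_pMr // ltr1n.
have hy' : forall j, `|(- y) 0 j - (0 : 'rV[R]_n) 0 j| < e.
  by move=> j; have := hy j; rewrite !mxE !subr0 normrN.
have fy : lf x y = e / 2 * x 0 l0.
  rewrite /lf (bigD1 l0) //= big1 ?addr0 ?mxE ?eqxx // => j /negbTE hj.
  by rewrite mxE hj mul0r.
have [a1 a1p h1] := fc _ (H _ hy).
have [a2 a2p h2] := fc _ (H _ hy').
have : 0 <= lf x y * lf x (- y).
  rewrite h1 h2 mulrACA; apply: mulr_ge0; [exact: mulr_ge0 | rewrite -expr2; exact: sqr_ge0].
rewrite lfN fy mulrN oppr_ge0 -expr2 leNgt exprn_even_gt0 //.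
have e2 : 0 < e / 2 by rewrite divr_gt0 // ltr0n.
by rewrite mulf_neq0 // gt_eqF.
Qed.

Lemma conv_sign w d : \det (hmx w ord0) != 0 -> (forall i, d i != 0) ->
  \sum_(i < n.+1) d i *: w i = 0 -> in_conv_hull w 0 -> exists t, forall i, 0 < t * d i.
Proof.
move=> hA hd hrel [l [lp [ls h0]]].
pose t := l ord0 / d ord0.
have hrel2 : \sum_(i < n.+1) (l i - t * d i) *: w i = 0.
  rewrite (eq_bigr (fun i => l i *: w i - t *: (d i *: w i))); last by move=> i _; rewrite scalerBl scalerA.
  by rewrite sumrB -scaler_sumr hrel scaler0 -h0 subr0.
have ht0 : l ord0 - t * d ord0 = 0 by rewrite /t mulfVK // subrr.
pose m := \row_(j < n) (l (lift ord0 j) - t * d (lift ord0 j)).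
have hm : m *m hmx w ord0 = 0.
  apply/rowP => k; rewrite !mxE.
  have E := congr1 (fun M : 'M[R]_(1,n) => M 0 k) hrel2.
  rewrite /= summxE big_ord_recl /= ht0 !mxE mul0r add0r in E.
  by rewrite -[RHS]E; apply: eq_bigr => j _; rewrite !mxE.
have hm0 : m = 0.
  have hu : hmx w ord0 \in unitmx by rewrite unitmxE unitfE.
  by rewrite -(mulmxK hu m) hm mul0mx.
have hl : forall i, l i = t * d i.
  move=> i; case: (unliftP ord0 i) => [j ->|->]; last by apply/eqP; rewrite -subr_eq0 ht0.
  by apply/eqP; rewrite -subr_eq0; have := congr1 (fun M : 'M[R]_(1,n) => M 0 j) hm0; rewrite !mxE => ->.
exists t => i; rewrite lt_def -hl lp andbT hl mulf_neq0 //.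
apply: contra_eq_neq ls => t0.

under eq_bigr => j _ do rewrite hl t0 mul0r.
by rewrite big1 // eq_sym oner_eq0.
Qed.

Lemma le_sum1 (I : finType) (F : I -> R) i : (forall j, 0 <= F j) -> F i <= \sum_j F j.
Proof. by move=> h; rewrite (bigD1 i) //= lerDl sumr_ge0. Qed.

Lemma int_exists w d : \det (hmx w ord0) != 0 -> (forall i, 0 < d i) ->
  \sum_(i < n.+1) d i *: w i = 0 -> in_interior (in_conv_hull w) 0.
Proof.
move=> hA hd hrel.
set A := hmx w ord0.
have hu : A \in unitmx by rewrite unitmxE unitfE.
set B := invmx A.
pose D := \sum_(i < n.+1) d i.
pose dm := \big[Num.min/1]_(i < n.+1) d i.
have dm0 : 0 < dm by rewrite /dm; elim/big_ind: _ => // x y hx hy; rewrite lt_min hx hy.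
have dmle : forall i, dm <= d i.
  by move=> i; rewrite /dm (bigD1 i) //= ge_min lexx.
have dD : dm <= D.
  apply: le_trans (dmle ord0) _; apply: le_sum1 => j; exact: ltW.
have D0 : 0 < D by apply: lt_le_trans dD.
pose K := \sum_(j < n) \sum_(k < n) `|B k j| + 1.
have K0 : 0 < K by rewrite ltr_wpDl ?sumr_ge0 // => j _; rewrite sumr_ge0.
have Kj : forall j, \sum_(k < n) `|B k j| <= K.
  move=> j.
  have h1 := @le_sum1 _ (fun j0 : 'I_n => \sum_(k < n) `|B k j0|) j (fun _ => sumr_ge0 _ (fun _ _ => normr_ge0 _)).
  by apply: le_trans h1 _; rewrite lerDl.
pose X := dm / (2 * D).
have X0 : 0 < X by rewrite divr_gt0 // mulr_gt0.
have Xh : X <= 2^-1.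
  rewrite /X ler_pdivrMr ?mulr_gt0 // mulrA mulVf ?mul1r // pnatr_eq0 //.
pose c := X / n.+1%:R.
have c0 : 0 < c by rewrite divr_gt0 // ltr0n.
have cX : c <= X.
  by rewrite ler_pdivrMr ?ltr0n // ler_peMr ?ler1n // ltW.
have cn : c * n%:R <= X.
  apply: (@le_trans _ _ (c * n.+1%:R)).
    by rewrite ler_wpM2l ?ler_nat // ltW.
  by rewrite /c divfK ?pnatr_eq0.
pose eps := c / K.
have eps0 : 0 < eps by rewrite divr_gt0.
exists eps => // y hy.
have hy' : forall k, `|y 0 k| <= eps.
  by move=> k; have := hy k; rewrite mxE subr0 => /ltW.
pose mu := y *m B.
have hmu : forall j, `|mu 0 j| <= c.
  move=> j; rewrite mxE; apply: le_trans (ler_norm_sum _ _ _) _.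
  have h2 : \sum_k `|y 0 k * B k j| <= \sum_k eps * `|B k j|.
    by apply: ler_sum => k _; rewrite normrM ler_wpM2r.
  apply: le_trans h2 _; rewrite -mulr_sumr.
  apply: le_trans (ler_wpM2l (ltW eps0) (Kj j)) _.
  by rewrite /eps divfK ?gt_eqF.
pose S := \sum_(j < n) mu 0 j.
have hS : S <= 2^-1.
  apply: le_trans (ler_norm _) _; apply: le_trans (ler_norm_sum _ _ _) _.
  apply: le_trans (ler_sum _ (fun j _ => hmu j)) _.
  rewrite sumr_const card_ord -[c *+ n]mulr_natr; exact: le_trans cn Xh.
pose alpha := (1 - S) / D.
have hS2 : 2^-1 <= 1 - S.
  by rewrite lerBrDl {2}(splitr 1) mul1r lerD2r.
have al0 : 0 <= alpha by rewrite divr_ge0 ?(ltW D0) // (le_trans _ hS2) // invr_ge0 ler0n.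
have hal : forall i, X <= alpha * d i.
  move=> i; apply: (@le_trans _ _ (alpha * dm)); last by rewrite ler_wpM2l.
  by rewrite /X /alpha invfM [_ / D * dm]mulrC ler_wpM2l ?(ltW dm0) // ler_wpM2r ?invr_ge0 ?(ltW D0).
pose lam i := alpha * d i + (if unlift ord0 i is Some j then mu 0 j else 0).
exists lam; split; [|split].
- move=> i; rewrite /lam; case: (unliftP ord0 i) => [j ->|->]; rewrite ?liftK ?unlift_none.
    apply: (@le_trans _ _ (alpha * d (lift ord0 j) - `|mu 0 j|)).
      by rewrite subr_ge0 (le_trans (hmu j)) // (le_trans cX) // hal.
    by rewrite lerD2l lerNl -normrN ler_norm.
  by rewrite addr0; exact: (le_trans (ltW X0) (hal ord0)).
- rewrite big_split /= -mulr_sumr [X in _ + X]big_ord_recl unlift_none add0r.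
  under [X in _ + X]eq_bigr => j _ do rewrite liftK.
  by rewrite /alpha divfK ?gt_eqF // subrK.
- have ymu : y = mu *m A by rewrite /mu /B mulmxKV.
  rewrite {1}ymu; apply/rowP => k; rewrite summxE !mxE.
  under [RHS]eq_bigr => i _ do rewrite mxE /lam mulrDl.
  rewrite big_split /=.
  have h0 : \sum_(i < n.+1) alpha * d i * w i 0 k = 0.
    have E := congr1 (fun M : 'M[R]_(1,n) => M 0 k) hrel; rewrite /= summxE mxE in E.
    under eq_bigr => i _ do rewrite -mulrA.
    rewrite -mulr_sumr -[RHS](mulr0 alpha); congr (_ * _).
    by rewrite -[RHS]E; apply: eq_bigr => i _; rewrite mxE.
  rewrite h0 add0r big_ord_recl unlift_none mul0r add0r.
  by apply: eq_bigr => j _; rewrite liftK /A /hmx !mxE.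
Qed.

Lemma hdet v (s : 'I_n.+1 -> bool) k :
  \det (hmx (fun i => (-1) ^+ s i *: v i) k) =
  (-1) ^+ (\sum_j s (lift k j)) * \det (hmx v k).
Proof.
have -> : hmx (fun i => (-1) ^+ s i *: v i) k =
   diag_mx (\row_j (-1) ^+ s (lift k j)) *m hmx v k.
  by rewrite mul_diag_mx; apply/matrixP => a b; rewrite !mxE.
by rewrite det_mulmx det_diag -prodrXr; congr (_ * _); apply: eq_bigr => j _; rewrite mxE.
Qed.

Lemma sgn_pos (b : bool) (x : R) : 0 < (-1) ^+ b * x -> b = (x < 0).
Proof.
by case: b; rewrite /= ?expr1 ?expr0 ?mulN1r ?mul1r ?oppr_gt0 // => h; rewrite ltNge ltW.
Qed.

Lemma sgn_neg (b : bool) (x : R) : (-1) ^+ b * x < 0 -> b = (0 < x).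
Proof.
by case: b; rewrite /= ?expr1 ?expr0 ?mulN1r ?mul1r ?oppr_lt0 // => h; rewrite ltNge ltW.
Qed.

End H.

From Stdlib Require Import ClassicalEpsilon.
Unset Implicit Arguments.

Theorem corollary8p3 (R : realFieldType) (n : nat) (hn : ~~ odd n)
    (v : 'I_n.+1 -> 'rV[R]_n) :
  Pf v = (-1) ^+ n./2 * 2 ^+ n * Sm v.
Proof.
pose c (i : 'I_n.+1) := (-1) ^+ (i : nat) * \det (hmx v i).
have hc : \sum_(i < n.+1) c i *: v i = 0 := cramer v hn.
pose ws (s : {ffun 'I_n.+1 -> bool}) := fun i => (-1) ^+ s i *: v i.
have hrel : forall s : {ffun 'I_n.+1 -> bool}, \sum_(i < n.+1) ((-1) ^+ s i * c i) *: ws s i = 0.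
  move=> s; rewrite -[RHS]hc; apply: eq_bigr => i _.
  by rewrite /ws scalerA mulrAC -mulrA mulrA -signr_addb addbb expr0 mul1r.
have Orws : forall s : {ffun 'I_n.+1 -> bool}, Or (hat (ws s) ord0) =
    (-1) ^+ (\sum_j s (lift ord0 j)) * Num.sg (\det (hmx v ord0)).
  by move=> s; rewrite /Or -/(hmx _ _) hdet sgrM sgrX sgrN1.
have hint0 : forall w : 'I_n.+1 -> 'rV[R]_n, in_interior (in_conv_hull w) 0 -> in_conv_hull w 0.
  move=> w [e e0 H]; apply: (H 0) => j; by rewrite subrr normr0.
rewrite /Sm.
case: (boolP [forall i, \det (hmx v i) != 0]) => [/forallP hnz | /forallPn [k hk]]; last first.
  have -> : Pf v = 0.
    rewrite /Pf; apply/eqP/prodf_eq0; exists k => //.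
    by rewrite /Or -/(hmx _ _) sgr_eq0; rewrite negbK in hk.
  rewrite big1 ?mulr0 // => s _; rewrite /Sf.
  case: excluded_middle_informative => // hi; exfalso.
  apply: (@not_int _ _ (ws s) k) hi.
  by rewrite hdet (eqP (negPn hk)) mulr0.
have cnz : forall i, c i != 0 by move=> i; rewrite mulf_neq0 ?signr_eq0.
pose s1 : {ffun 'I_n.+1 -> bool} := [ffun i => c i < 0].
pose s2 : {ffun 'I_n.+1 -> bool} := [ffun i => 0 < c i].
have s12 : s2 != s1.
  apply/eqP => /ffunP /(_ ord0); rewrite !ffunE.
  by move: (cnz ord0); case: ltgtP.
have detnz : forall s, \det (hmx (ws s) ord0) != 0.
  by move=> s; rewrite hdet mulf_neq0 ?signr_eq0.
have Sf0 : forall s, s != s1 -> s != s2 -> Sf (ws s) = 0.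
  move=> s h1 h2; rewrite /Sf; case: excluded_middle_informative => // hi.
  have [t ht] := conv_sign (detnz s) (fun i => mulf_neq0 (negbT (signr_eq0 _ _)) (cnz i)) (hrel s) (hint0 _ hi).
  have t0 : t != 0 by apply: contraTneq (ht ord0) => ->; rewrite mul0r ltxx.
  case: (ltgtP t 0) t0 => // tl _.
    case/eqP: h2; apply/ffunP => i; rewrite ffunE; apply: sgn_neg.
    by have := ht i; rewrite nmulr_rgt0.
  case/eqP: h1; apply/ffunP => i; rewrite ffunE; apply: sgn_pos.
  by have := ht i; rewrite pmulr_rgt0.
have Sf1 : Sf (ws s1) = Or (hat (ws s1) ord0).
  rewrite /Sf; case: excluded_middle_informative => // hi; exfalso; apply: hi.
  apply: (int_exists (detnz s1) _ (hrel s1)) => i.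
  rewrite ffunE; case: (ltgtP (c i) 0) (cnz i) => // h _; rewrite ?expr1 ?expr0.
    by rewrite mulN1r oppr_gt0.
  by rewrite mul1r.
have Sf2 : Sf (ws s2) = Or (hat (ws s2) ord0).
  rewrite /Sf; case: excluded_middle_informative => // hi; exfalso; apply: hi.
  apply: (@int_exists _ _ _ (fun i => - ((-1) ^+ s2 i * c i)) (detnz s2)).
    move=> i; rewrite ffunE oppr_gt0; case: (ltgtP (c i) 0) (cnz i) => // h _; rewrite ?expr1 ?expr0.
      by rewrite mul1r.
    by rewrite mulN1r oppr_lt0.
  by under eq_bigr => i _ do rewrite scaleNr; rewrite sumrN hrel oppr0.
rewrite (bigD1 s1) //= (bigD1 s2) /=; last by rewrite s12.
rewrite big1 ?addr0; last by move=> s /andP [h2 h1]; apply: Sf0.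
rewrite Sf1 Sf2 !Orws.
have e1 : (-1) ^+ (\sum_j s1 (lift ord0 j)) = \prod_j Num.sg (c (lift ord0 j)) :> R.
  by rewrite -prodrXr; apply: eq_bigr => j _; rewrite ffunE sgr_def cnz mulr1n.
have e2 : (-1) ^+ (\sum_j s2 (lift ord0 j)) = \prod_j Num.sg (c (lift ord0 j)) :> R.
  rewrite -prodrXr (eq_bigr (fun j => - Num.sg (c (lift ord0 j)))).
    by rewrite prodrN card_ord -signr_odd (negbTE hn) expr0 mul1r.
  move=> j _; rewrite ffunE sgr_def cnz mulr1n.
  by case: (ltgtP (c (lift ord0 j)) 0) (cnz (lift ord0 j)) => //; rewrite ?expr1 ?expr0 ?opprK.
rewrite e1 e2.
set Q := \prod_j _ * _.
have hQ : Q = (-1) ^+ (\sum_(i < n.+1) (i : nat)) * Pf v.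
  rewrite /Pf -prodrXr -big_split /= big_ord_recl /Q mulrC; congr (_ * _).
    by rewrite /c /= expr0 mul1r.
  by apply: eq_bigr => j _; rewrite /c sgrM sgrX sgrN1.
have hs : (-1) ^+ (\sum_(i < n.+1) (i : nat)) = (-1) ^+ n./2 :> R.
  rewrite -(@big_mkord _ 0%N addn n.+1 xpredT (fun i => i)) bin2_sum bin2odd /=; last by [].
  by rewrite -signr_odd oddM /= hn /= signr_odd.
rewrite hQ hs.
set a := (-1) ^+ n./2 : R.
have -> : a * Pf v + a * Pf v = 2 * (a * Pf v) by rewrite mulr_natl mulr2n.
rewrite exprS invfM.
set t := 2 ^+ n : R.
have t0 : t != 0 by rewrite expf_neq0 // pnatr_eq0.
have h20 : (2 : R) != 0 by rewrite pnatr_eq0.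
have aa : a * a = 1 by rewrite -expr2 sqrr_sign.
by rewrite [2^-1 * _]mulrC -!mulrA mulKf // !mulrA mulfK // aa mul1r.
Qed.
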